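(* Let $G=(V,E)$ be an unweighted graph, i.e. $w(u,v)=1$ if $(u,v)\in E$ and $w(u,v)=0$ otherwise. Then $G$ is a ground-truth input if and only if each connected component of $G$ is a clique.
   Context: $G$ is a ground-truth input if there exist an ultrametric $d$ on $V$ (a metric with $d(x,y)\le\max\{d(x,z),d(y,z)\}$ for all $x,y,z\in V$) and a non-increasing function $f:\mathbb{R}_+\to\mathbb{R}_+$ such that $w(x,y)=f(d(x,y))$ for all distinct $x,y\in V$. *)

(* Defs.v *)
From mathcomp Require Import all_boot all_order all_algebra.
From mathcomp Require Import reals.
Set Implicit Arguments. Unset Strict Implicit. Unset Printing Implicit Defensive.
Import Order.TTheory GRing.Theory Num.Theory.
Local Open Scope ring_scope.

Definition is_ultrametric (R : realType) (T : Type) (d : T -> T -> R) : Prop :=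
  [/\ (forall x y, 0 <= d x y),
      (forall x y, d x y = 0 <-> x = y),
      (forall x y, d x y = d y x),
      (forall x y z, d x y <= d x z + d z y) &
      (forall x y z, d x y <= Num.max (d x z) (d y z))].

(* f : R_+ -> R_+ non-increasing, encoded as a total function on R whose
   restriction to [0, +oo) maps into [0, +oo) and is non-increasing there. *)
Definition nonincr_nonneg (R : realType) (f : R -> R) : Prop :=
  (forall x, 0 <= x -> 0 <= f x) /\
  (forall x y, 0 <= x -> x <= y -> f y <= f x).

Definition ground_truth_input (R : realType) (T : eqType) (w : T -> T -> R) : Prop :=
  exists (d : T -> T -> R) (f : R -> R),
    [/\ is_ultrametric d, nonincr_nonneg f &
        forall x y, x != y -> w x y = f (d x y)].

Definition unweighted_weight (R : realType) (T : Type) (e : rel T) : T -> T -> R :=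
  fun u v => if e u v then 1 else 0.

(* Main.v *)
Require Import Defs.
From mathcomp Require Import all_boot all_order all_algebra.
From mathcomp Require Import reals.
From mathcomp Require Import lra.
Import Order.TTheory GRing.Theory Num.Theory.
Local Open Scope ring_scope.

Theorem proposition1 (R : realType) (T : finType) (e : rel T)
  (e_sym : symmetric e) (e_irr : irreflexive e) :
  ground_truth_input (unweighted_weight R e) <->
  (forall x y : T, connect e x y -> x != y -> e x y).
Proof.
have csym := sym_connect_sym e_sym.
split.
- move=> [d [f [[d0 dE dS _ dU] [f0 fM] Hw]]] x y.
  have one_e : forall a b, a != b -> e a b -> f (d a b) = 1.
    by move=> a b ab eab; rewrite -Hw // /unweighted_weight eab.
  have step : forall a b c, a != c -> e a b -> e b c -> e a c.
    move=> a b c ac eab ebc.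
    have ab : a != b by apply/negP => /eqP E; subst b; by rewrite e_irr in eab.
    have bc : b != c by apply/negP => /eqP E; subst c; by rewrite e_irr in ebc.
    have H1 := one_e a b ab eab; have H2 := one_e b c bc ebc.
    have Hac := Hw a c ac; rewrite /unweighted_weight in Hac.
    case: (boolP (e a c)) Hac => // _ Hac.
    have : 1 <= f (d a c).
      have := dU a c b; rewrite (dS c b) le_max => /orP [h|h].
      + by rewrite -H1; apply: fM.
      + by rewrite -H2; apply: fM.
    by rewrite -Hac; lra.
  have gen : forall (p : seq T) a, (a = x \/ e x a) -> path e a p ->
      last a p = x \/ e x (last a p).
    elim => [|b p IH] a Ha //= /andP [eab pth].
    apply: IH => //.
    case: Ha => [<-|exa]; first by right.
    case: (eqVneq x b) => [->|xb]; first by left.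
    by right; apply: step exa eab.
  move=> /connectP [p pth ->] xl.
  case: (gen p x (or_introl erefl) pth) => // E.
  by rewrite E eqxx in xl.
- move=> Hc.
  pose d := fun x y : T => if x == y then 0 else if connect e x y then 1 else 2 : R.
  pose f := fun t : R => if t <= 1 then 1 else 0 : R.
  exists d, f.
  have dS : forall x y, d x y = d y x.
    by move=> x y; rewrite /d eq_sym csym.
  have d0 : forall x y, 0 <= d x y.
    by move=> x y; rewrite /d; case: ifP => _ //; case: ifP => _ //; lra.
  have dU : forall x y z, d x y <= Num.max (d x z) (d y z).
    move=> x y z; rewrite /d.
    case: (eqVneq x y) => [_|xy]; first by rewrite le_max; apply/orP; left;
      case: ifP => _ //; case: ifP => _ //; lra.
    case: (eqVneq x z) => [exz|xz].
      subst z; rewrite eq_sym (negbTE xy) csym; rewrite le_max; apply/orP; right; lra.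
    case: (eqVneq y z) => [eyz|yz].
      subst z; rewrite le_max; apply/orP; left; lra.
    case: (boolP (connect e x y)) => cxy.
      by rewrite le_max; apply/orP; left; case: ifP => _; lra.
    case: (boolP (connect e x z)) => cxz; last by rewrite le_max lexx.
    case: (boolP (connect e y z)) => cyz; last by rewrite le_max lexx orbT.
    by exfalso; move/negP: cxy; apply; apply: connect_trans cxz _; rewrite csym.
  split.
  + split => //.
    * move=> x y; split; last by move=> ->; rewrite /d eqxx.
      rewrite /d; case: (eqVneq x y) => // _; case: ifP => _ E; exfalso; lra.
    * move=> x y z; apply: le_trans (dU x y z) _.
      have := d0 x z; have := d0 y z; rewrite (dS y z).
      move: (d x z) (d z y) => a b ha hb.
      rewrite ge_max; apply/andP; split; lra.
  + split.
    * by move=> x _; rewrite /f; case: ifP => _; lra.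
    * move=> x y hx hxy; rewrite /f.
      case: (boolP (y <= 1)) => hy.
        by rewrite (le_trans hxy hy) lexx.
      by case: ifP => _; lra.
  + move=> x y xy; rewrite /unweighted_weight /f /d (negbTE xy).
    case: (boolP (connect e x y)) => cxy.
      by rewrite (Hc x y cxy xy) lexx.
    have -> : e x y = false by apply/negP => exy; move/negP: cxy; apply; apply: connect1.
    by case: ifP => //; lra.
Qed.
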